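(* Let $G$ be a topological group and $A$ a topological $G$-module, and suppose that for every $p\ge 0$ the augmented column complex $0\to A_c^p(G,A)\xrightarrow{\epsilon}A_{lc}^{p,0}(G,A)\xrightarrow{d_v}A_{lc}^{p,1}(G,A)\xrightarrow{d_v}\cdots$ is exact. Then the inclusion $C_c^*(G,A)\hookrightarrow C_{lc}^*(G,A)$ induces an isomorphism in cohomology.
   Context: A topological $G$-module is an abelian topological group $A$ with an action of $G$ by group automorphisms such that $G\times A\to A$ is continuous. For an identity neighbourhood $U$ of $G$ put $\Gamma_U^0:=G$ and, for $q\ge1$, $\Gamma_U^q:=\{(g_0,\dots,g_q)\in G^{q+1}\mid g_i^{-1}g_j\in U\ \forall i,j\}$. $G$ acts on maps $f\colon G^{n+1}\to A$ by $(g.f)(g_0,\dots,g_n)=g.f(g^{-1}g_0,\dots,g^{-1}g_n)$, with differential $df(g_0,\dots,g_{n+1})=\sum_i(-1)^if(g_0,\dots,\widehat{g_i},\dots,g_{n+1})$. $C_c^n(G,A)$ is the complex of continuous $G$-equivariant maps $G^{n+1}\to A$; $C_{lc}^n(G,A)$ is the complex of $G$-equivariant maps $G^{n+1}\to A$ whose restriction to $\Gamma_U^n$ is continuous for some identity neighbourhood $U$. $A_c^p(G,A):=C(G^{p+1},A)$ (all continuous maps). $A_{lc}^{p,q}(G,A)$ is the group of maps $f\colon G^{p+1}\times G^{q+1}\to A$ whose restriction to $G^{p+1}\times\Gamma_U^q$ is continuous for some identity neighbourhood $U$, with $d_vf(\vec x,y_0,\dots,y_{q+1})=(-1)^p\sum_{i=0}^{q+1}(-1)^if(\vec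 x,y_0,\dots,\widehat{y_i},\dots,y_{q+1})$, and the augmentation is $\epsilon(f)(\vec x,y_0)=f(\vec x)$. *)

(* Defs.v *)
From HB Require Import structures.
From mathcomp Require Import all_boot all_order all_algebra.
From mathcomp Require Import all_classical all_reals all_analysis.
Set Implicit Arguments. Unset Strict Implicit. Unset Printing Implicit Defensive.
Import Order.TTheory GRing.Theory Num.Theory.
Local Open Scope classical_set_scope.
Local Open Scope ring_scope.

Record topGroup := TopGroup {
  tg_car :> topologicalType;
  tg_mul : tg_car -> tg_car -> tg_car;
  tg_inv : tg_car -> tg_car;
  tg_one : tg_car;
  tg_mulA : forall x y z, tg_mul x (tg_mul y z) = tg_mul (tg_mul x y) z;
  tg_mul1g : forall x, tg_mul tg_one x = x;
  tg_mulg1 : forall x, tg_mul x tg_one = x;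
  tg_mulVg : forall x, tg_mul (tg_inv x) x = tg_one;
  tg_mulgV : forall x, tg_mul x (tg_inv x) = tg_one;
  tg_mul_cont : continuous (fun p : tg_car * tg_car => tg_mul p.1 p.2);
  tg_inv_cont : continuous tg_inv
}.

Record topGModule (G : topGroup) := TopGModule {
  tm_car :> topologicalZmodType;
  tm_act : G -> tm_car -> tm_car;
  tm_act_add : forall g a b, tm_act g (a + b) = tm_act g a + tm_act g b;
  tm_act_one : forall a, tm_act (tg_one G) a = a;
  tm_act_mul : forall g h a, tm_act (tg_mul g h) a = tm_act g (tm_act h a);
  tm_act_cont : continuous (fun p : G * tm_car => tm_act p.1 p.2)
}.

(** G^{n+1} is represented by functions 'I_(n+1) -> G with the product
    topology. *)
Notation "G ^^ n" := ({ptws 'I_n -> tg_car G}) (at level 30).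

Definition Gamma (G : topGroup) (U : set G) (q : nat) : set (G ^^ q.+1) :=
  if q is 0 then setT
  else [set x | forall i j, U (tg_mul (tg_inv (x i)) (x j))].
Arguments Gamma G U q : clear implicits.

Definition equivariant (G : topGroup) (A : topGModule G) (n : nat)
  (f : G ^^ n.+1 -> A) : Prop :=
  forall (g : G) (x : G ^^ n.+1),
    tm_act g (f (fun i => tg_mul (tg_inv g) (x i))) = f x.

Definition dhom (G : topGroup) (A : topGModule G) (n : nat)
  (f : G ^^ n.+1 -> A) : G ^^ n.+2 -> A :=
  fun x => \sum_(i < n.+2) (f (fun j => x (lift i j))) *~ ((-1) ^+ i).

Definition Cc (G : topGroup) (A : topGModule G) (n : nat)
  (f : G ^^ n.+1 -> A) : Prop :=
  equivariant f /\ continuous f.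

Definition Clc (G : topGroup) (A : topGModule G) (n : nat)
  (f : G ^^ n.+1 -> A) : Prop :=
  equivariant f /\
  exists U : set G, nbhs (tg_one G) U /\ {within Gamma G U n, continuous f}.

Definition cocycle (G : topGroup) (A : topGModule G)
  (C : forall n, (G ^^ n.+1 -> A) -> Prop) (n : nat) (f : G ^^ n.+1 -> A) :=
  C n f /\ dhom f = 0.

Definition coboundary (G : topGroup) (A : topGModule G)
  (C : forall n, (G ^^ n.+1 -> A) -> Prop) (n : nat) (f : G ^^ n.+1 -> A) :
  Prop :=
  match n return (G ^^ n.+1 -> A) -> Prop with
  | 0 => fun f => f = 0
  | m.+1 => fun f => exists h : G ^^ m.+1 -> A, C m h /\ f = dhom h
  end f.

(** The map H^n(C_c) -> H^n(C_lc) induced by the inclusion is bijective: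
    - injective: a C_c-cocycle that is a C_lc-coboundary is a
      C_c-coboundary;
    - surjective: every C_lc-cocycle differs from a C_c-cocycle by a
      C_lc-coboundary. *)
Definition inclusion_induces_iso_in_cohomology (G : topGroup)
  (A : topGModule G) : Prop :=
  forall n : nat,
    (forall f : G ^^ n.+1 -> A,
       cocycle (@Cc G A) f -> coboundary (@Clc G A) f ->
               coboundary (@Cc G A) f) /\
    (forall f : G ^^ n.+1 -> A, cocycle (@Clc G A) f ->
       exists f' : G ^^ n.+1 -> A, cocycle (@Cc G A) f' /\
                  coboundary (@Clc G A) (f - f')).

Definition Ac (G : topGroup) (A : topGModule G) (p : nat)
  (f : G ^^ p.+1 -> A) : Prop := continuous f.

Definition Alc (G : topGroup) (A : topGModule G) (p q : nat)
  (f : G ^^ p.+1 * G ^^ q.+1 -> A) : Prop :=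
  exists U : set G, nbhs (tg_one G) U /\
    {within setT `*` Gamma G U q, continuous f}.

Definition dv (G : topGroup) (A : topGModule G) (p q : nat)
  (f : G ^^ p.+1 * G ^^ q.+1 -> A) : G ^^ p.+1 * G ^^ q.+2 -> A :=
  fun xy => (\sum_(i < q.+2) (f (xy.1, fun j => xy.2 (lift i j))) *~ ((-1) ^+ i))
            *~ ((-1) ^+ p).

Definition aug (G : topGroup) (A : topGModule G) (p : nat)
  (f : G ^^ p.+1 -> A) : G ^^ p.+1 * G ^^ 1 -> A :=
  fun xy => f xy.1.

Definition column_exact (G : topGroup) (A : topGModule G) (p : nat) : Prop :=
  (forall f : G ^^ p.+1 -> A, Ac f -> aug f = 0 -> f = 0 :> (G ^^ p.+1 -> A)) /\
  (forall f : G ^^ p.+1 * G ^^ 1 -> A, Alc f -> dv f = 0 ->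
     exists h : G ^^ p.+1 -> A, Ac h /\ f = aug h) /\
  (forall (q : nat) (f : G ^^ p.+1 * G ^^ q.+2 -> A), Alc f -> dv f = 0 ->
     exists h : G ^^ p.+1 * G ^^ q.+1 -> A, Alc h /\ f = dv h).

(* Main.v *)
Require Import Defs.
From HB Require Import structures.
From mathcomp Require Import all_boot all_order all_algebra.
From mathcomp Require Import all_classical all_reals all_analysis.
From mathcomp Require Import zify.
Set Implicit Arguments. Unset Strict Implicit. Unset Printing Implicit Defensive.
Import Order.TTheory GRing.Theory Num.Theory.
Local Open Scope classical_set_scope.
Local Open Scope ring_scope.

Section Main.
Variables (G : topGroup) (A : topGModule G).
Local Notation mul := (@tg_mul G).
Local Notation inv := (@tg_inv G).
Local Notation one := (tg_one G).
Local Notation act := (@tm_act G A).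

Lemma mulKg (a b : G) : mul (inv a) (mul a b) = b.
Proof. by rewrite tg_mulA tg_mulVg tg_mul1g. Qed.
Lemma mulKVg (a b : G) : mul a (mul (inv a) b) = b.
Proof. by rewrite tg_mulA tg_mulgV tg_mul1g. Qed.
Lemma invMg (a b : G) : inv (mul a b) = mul (inv b) (inv a).
Proof.
have : mul (mul a b) (mul (inv b) (inv a)) = one.
  by rewrite -tg_mulA mulKVg tg_mulgV.
move=> h; rewrite -[inv (mul a b)]tg_mulg1 -h tg_mulA tg_mulVg tg_mul1g //.
Qed.

Lemma act0 (g : G) : act g 0 = 0 :> A.
Proof. by apply: (addrI (act g 0)); rewrite -tm_act_add !addr0. Qed.
Lemma actN (g : G) (a : A) : act g (- a) = - act g a.
Proof. by apply/eqP; rewrite -subr_eq0 opprK -tm_act_add addNr act0. Qed.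
Lemma act_sum (g : G) I (r : seq I) (P : pred I) (F : I -> A) :
  act g (\sum_(i <- r | P i) F i) = \sum_(i <- r | P i) act g (F i).
Proof. exact: (big_morph _ (tm_act_add g) (act0 g)). Qed.
Lemma act_mulrn (g : G) (a : A) n : act g (a *+ n) = act g a *+ n.
Proof. elim: n => [|n IH]; by rewrite ?mulr0n ?act0 // !mulrS tm_act_add IH. Qed.
Lemma act_mulrz (g : G) (a : A) (z : int) : act g (a *~ z) = act g a *~ z.
Proof. by case: z => n; [exact: act_mulrn | rewrite NegzE !mulrNz actN act_mulrn]. Qed.

Definition tup N (c : nat -> G) : G ^^ N := fun i => c i.
Arguments tup : clear implicits.
Definition nf N (x : G ^^ N) : nat -> G :=
  fun k => if (insub k : option 'I_N) is Some i then x i else one.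

Lemma nf_ord N (x : G ^^ N) (i : 'I_N) : nf x i = x i.
Proof. by rewrite /nf valK. Qed.
Lemma tupK N (x : G ^^ N) : tup N (nf x) = x.
Proof. by apply: functional_extensionality_dep => i; rewrite /tup nf_ord. Qed.
Lemma nf_tup N c k : (k < N)%N -> nf (tup N c) k = c k.
Proof. by move=> h; rewrite /nf insubT. Qed.
Lemma eq_tup N c c' : (forall k, (k < N)%N -> c k = c' k) -> tup N c = tup N c'.
Proof. by move=> h; apply: functional_extensionality_dep => i; rewrite /tup h. Qed.

Lemma face_tup n (x : G ^^ n.+2) (i : 'I_n.+2) :
  ((fun j : 'I_n.+1 => x (lift i j)) : G ^^ n.+1)
   = tup n.+1 (fun k => nf x (bump i k)).
Proof.
apply: functional_extensionality_dep => j; rewrite /tup.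
by rewrite -(nf_ord x (lift i j)).
Qed.

Lemma dhomE n (f : G ^^ n.+1 -> A) x :
  dhom f x = \sum_(0 <= i < n.+2) f (tup n.+1 (fun k => nf x (bump i k))) *~ (-1) ^+ i.
Proof.
rewrite big_mkord; apply: eq_bigr => i _; by rewrite face_tup.
Qed.

Lemma bumpE h i : bump h i = if (h <= i)%N then i.+1 else i.
Proof. by rewrite /bump; case: leqP. Qed.

Lemma simplicial_zero (a : nat -> nat -> A) :
  (forall i j, (i <= j)%N -> a j.+1 i = - a i j) ->
  forall N, \sum_(0 <= i < N.+1) \sum_(0 <= j < N) a i j = 0.
Proof.
move=> ha; elim=> [|N IH]; first by rewrite big_nat1 big_geq.
rewrite big_nat_recr //=.
rewrite (eq_bigr (fun i => \sum_(0 <= j < N) a i j + a i N)); last first.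
  by move=> i _; rewrite big_nat_recr.
rewrite big_split /= IH add0r big_nat_recr //= addrAC.
rewrite -addrA addrCA -big_nat_recr //=.
rewrite [X in X + _](@eq_big_nat _ _ _ 0 N.+1 _ (fun j => - a j N)); last first.
  by move=> j /andP[_ hj]; apply: ha; rewrite -ltnS.
by rewrite sumrN addNr.
Qed.


Lemma bump_bump i j k : (i <= j)%N -> bump j.+1 (bump i k) = bump i (bump j k).
Proof. move=> h; rewrite /bump; case: (leqP i k) => ?; case: (leqP j k) => ? /=; do ?case: leqP => ?; lia. Qed.

Lemma dhom2 n (f : G ^^ n.+1 -> A) : dhom (dhom f) = 0.
Proof.
apply: functional_extensionality_dep => x; rewrite dhomE /=.
pose a i j := f (tup n.+1 (fun k => nf x (bump i (bump j k)))) *~ ((-1) ^+ j * (-1) ^+ i).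
transitivity (\sum_(0 <= i < n.+3) \sum_(0 <= j < n.+2) a i j); last first.
  apply: simplicial_zero => i j hij; rewrite /a exprS mulN1r mulrN mulrNz mulrC.
  by congr (- (f _ *~ _)); apply: eq_tup => k _; rewrite bump_bump.
apply: eq_bigr => i _; rewrite dhomE mulrz_suml; apply: eq_big_nat => j /andP[_ hj].
rewrite /a mulrzA; congr (f _ *~ _ *~ _); apply: eq_tup => k hk.
rewrite nf_tup // bumpE; case: (leqP j k) => ?; lia.
Qed.

Lemma fadd (T : Type) (f g : T -> A) x : (f + g) x = f x + g x.
Proof. by []. Qed.
Lemma fopp (T : Type) (f : T -> A) x : (- f) x = - f x.
Proof. by []. Qed.
Lemma fsub (T : Type) (f g : T -> A) x : (f - g) x = f x - g x.
Proof. by []. Qed.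
Lemma fzero (T : Type) x : (0 : T -> A) x = 0.
Proof. by []. Qed.
Definition fE := (fadd, fopp, fzero).

Lemma dhom0 n : dhom (0 : G ^^ n.+1 -> A) = 0.
Proof.
apply: functional_extensionality_dep => x; rewrite /dhom big1 // => i _.
by rewrite mul0rz.
Qed.

Lemma dhomD n (f g : G ^^ n.+1 -> A) : dhom (f + g) = dhom f + dhom g.
Proof.
apply: functional_extensionality_dep => x; rewrite /dhom fadd -big_split.
by apply: eq_bigr => i _ /=; rewrite mulrzDl.
Qed.

Lemma dhomN n (f : G ^^ n.+1 -> A) : dhom (- f) = - dhom f.
Proof.
apply: functional_extensionality_dep => x; rewrite /dhom fopp -sumrN.
by apply: eq_bigr => i _ /=; rewrite mulNrz.
Qed.

Lemma dhomB n (f g : G ^^ n.+1 -> A) : dhom (f - g) = dhom f - dhom g.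
Proof. by rewrite dhomD dhomN. Qed.

Lemma dhomZ n (f : G ^^ n.+1 -> A) z :
  dhom (fun x => f x *~ z) = fun x => dhom f x *~ z.
Proof.
apply: functional_extensionality_dep => x; rewrite /dhom mulrz_suml.
by apply: eq_bigr => i _; rewrite -!mulrzA mulrC.
Qed.

Lemma dhom_exch p q (H : G ^^ p.+1 -> G ^^ q.+1 -> A) x y :
  dhom (fun y' => dhom (fun x' => H x' y') x) y =
  dhom (fun x' => dhom (fun y' => H x' y') y) x.
Proof.
rewrite /dhom; under eq_bigr do rewrite mulrz_suml.
rewrite exchange_big /=; apply: eq_bigr => i _; rewrite mulrz_suml.
by apply: eq_bigr => j _; rewrite -!mulrzA mulrC.
Qed.

Local Notation K p q := (G ^^ p.+1 * G ^^ q.+1 -> A).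

Definition dh p q (F : K p q) : K p.+1 q :=
  fun xy => dhom (fun x => F (x, xy.2)) xy.1.

Lemma dvE p q (F : K p q) xy :
  dv F xy = dhom (fun y => F (xy.1, y)) xy.2 *~ (-1) ^+ p.
Proof. by []. Qed.

Lemma dh0 p q : dh (0 : K p q) = 0.
Proof.
apply: functional_extensionality_dep => xy; rewrite /dh.
exact: (congr1 (fun h => h xy.1) (dhom0 p)).
Qed.
Lemma dv0 p q : dv (0 : K p q) = 0.
Proof.
apply: functional_extensionality_dep => xy; rewrite dvE.
by rewrite (congr1 (fun h => h xy.2) (dhom0 q)) mul0rz.
Qed.
Lemma dhD p q (F F' : K p q) : dh (F + F') = dh F + dh F'.
Proof.
apply: functional_extensionality_dep => xy; rewrite /dh.
exact: (congr1 (fun h => h xy.1) (dhomD (fun x => F (x, xy.2)) (fun x => F' (x, xy.2)))).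
Qed.
Lemma dhN p q (F : K p q) : dh (- F) = - dh F.
Proof.
apply: functional_extensionality_dep => xy; rewrite /dh.
exact: (congr1 (fun h => h xy.1) (dhomN (fun x => F (x, xy.2)))).
Qed.
Lemma dvD p q (F F' : K p q) : dv (F + F') = dv F + dv F'.
Proof.
apply: functional_extensionality_dep => xy; rewrite fadd !dvE -mulrzDl.
by rewrite (congr1 (fun h => h xy.2) (dhomD (fun y => F (xy.1, y)) (fun y => F' (xy.1, y)))).
Qed.
Lemma dvN p q (F : K p q) : dv (- F) = - dv F.
Proof.
apply: functional_extensionality_dep => xy; rewrite fopp !dvE -mulNrz.
by rewrite (congr1 (fun h => h xy.2) (dhomN (fun y => F (xy.1, y)))).
Qed.

Lemma dhdh p q (F : K p q) : dh (dh F) = 0.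
Proof.
apply: functional_extensionality_dep => xy; rewrite /dh /=.
exact: (congr1 (fun h => h xy.1) (dhom2 (fun x => F (x, xy.2)))).
Qed.

Lemma dvdv p q (F : K p q) : dv (dv F) = 0.
Proof.
apply: functional_extensionality_dep => xy; rewrite dvE /=.
under eq_fun do rewrite dvE /=.
rewrite (congr1 (fun h => h xy.2) (dhomZ (dhom (fun y => F (xy.1, y))) _)) /=.
by rewrite (congr1 (fun h => h xy.2) (dhom2 (fun y => F (xy.1, y)))) /= !mul0rz.
Qed.

Lemma dvdh p q (F : K p q) : dv (dh F) = - dh (dv F).
Proof.
apply: functional_extensionality_dep => xy; rewrite dvE /dh /=.
rewrite fopp.
have -> : (fun x => dv F (x, xy.2)) = (fun x => dhom (fun y => F (x, y)) xy.2 *~ (-1) ^+ p) by [].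
rewrite (congr1 (fun h => h xy.1) (dhomZ (fun x => dhom (fun y => F (x, y)) xy.2) _)) /=.
rewrite (dhom_exch (fun x y => F (x, y))) exprS mulN1r mulrNz //.
Qed.

Definition Bi := forall p q : nat, K p q.
Definition Dt (T : Bi) : Bi := fun p q =>
  (match q return K p q with 0 => 0 | q'.+1 => dv (T p q') end) +
  (match p return K p q with 0 => 0 | p'.+1 => dh (T p' q) end).
Arguments Dt : clear implicits.

Lemma Dt00 T : Dt T 0 0 = 0.
Proof. by rewrite /Dt addr0. Qed.
Lemma Dt0S T q : Dt T 0 q.+1 = dv (T 0 q).
Proof. by rewrite /Dt addr0. Qed.
Lemma DtS0 T p : Dt T p.+1 0 = dh (T p 0).
Proof. by rewrite /Dt add0r. Qed.
Lemma DtSS T p q : Dt T p.+1 q.+1 = dv (T p.+1 q) + dh (T p q.+1).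
Proof. by []. Qed.

Lemma DtDt T p q : Dt (Dt T) p q = 0.
Proof.
case: p => [|p]; case: q => [|q].
- by rewrite Dt00.
- rewrite Dt0S; case: q => [|q]; first by rewrite Dt00 dv0.
  by rewrite Dt0S dvdv.
- rewrite DtS0; case: p => [|p]; first by rewrite Dt00 dh0.
  by rewrite DtS0 dhdh.
- rewrite DtSS; case: p => [|p]; case: q => [|q].
  + by rewrite Dt0S DtS0 dvdh addNr.
  + by rewrite Dt0S DtSS dvD dvdv add0r dvdh addNr.
  + by rewrite DtS0 DtSS dhD dhdh addr0 dvdh addNr.
  + by rewrite !DtSS dvD dhD dvdv dhdh add0r addr0 dvdh addNr.
Qed.

Definition addB (T T' : Bi) : Bi := fun p q => T p q + T' p q.
Definition subB (T T' : Bi) : Bi := fun p q => T p q - T' p q.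
Arguments addB : clear implicits.
Arguments subB : clear implicits.

Lemma Dt_add T T' p q : Dt (addB T T') p q = Dt T p q + Dt T' p q.
Proof.
case: p => [|p]; case: q => [|q].
- by rewrite !Dt00 addr0.
- by rewrite !Dt0S dvD.
- by rewrite !DtS0 dhD.
- by rewrite !DtSS dvD dhD addrACA.
Qed.

Lemma Dt_sub T T' p q : Dt (subB T T') p q = Dt T p q - Dt T' p q.
Proof.
case: p => [|p]; case: q => [|q].
- by rewrite !Dt00 subr0.
- by rewrite !Dt0S dvD dvN.
- by rewrite !DtS0 dhD dhN.
- by rewrite !DtSS !dvD !dhD dvN dhN opprD addrACA.
Qed.

Definition E (T : Bi) k q (c : nat -> G) : A :=
  T k q (tup k.+1 c, tup q.+1 (fun j => c (k + j)%N)).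

Definition Del n (T : Bi) : G ^^ n.+1 -> A := fun z =>
  \sum_(0 <= k < n.+1)
     T k (n - k)%N (tup k.+1 (nf z), tup (n - k).+1 (fun j => nf z (k + j)%N)).

Arguments E : clear implicits.
Arguments Del : clear implicits.
Lemma Del_tup n T c : Del n T (tup n.+1 c) = \sum_(0 <= k < n.+1) E T k (n - k) c.
Proof.
apply: eq_big_nat => k /andP[_ hk]; rewrite /E.
by congr (T _ _ (_, _)); apply: eq_tup => m hm; rewrite nf_tup //; lia.
Qed.

Definition VV (T : Bi) k q (c : nat -> G) : A :=
  dv (T k q) (tup k.+1 c, tup q.+2 (fun j => c (k + j)%N)).
Definition HH (T : Bi) k q (c : nat -> G) : A :=
  dh (T k q) (tup k.+2 c, tup q.+1 (fun j => c (k.+1 + j)%N)).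

Arguments VV : clear implicits.
Arguments HH : clear implicits.
Lemma dhom_tup N (f : G ^^ N.+1 -> A) c :
  dhom f (tup N.+2 c) = \sum_(0 <= i < N.+2) f (tup N.+1 (fun k => c (bump i k))) *~ (-1) ^+ i.
Proof.
rewrite dhomE; apply: eq_big_nat => i /andP[_ hi]; congr (f _ *~ _).
by apply: eq_tup => k hk; rewrite nf_tup // bumpE; case: (leqP i k) => ?; lia.
Qed.

Lemma PK (T : Bi) k q c :
  VV T k q c + HH T k q c =
  \sum_(0 <= l < (k + q).+2)
     T k q (tup k.+1 (fun m => c (bump l m)), tup q.+1 (fun j => c (bump l (k + j)))) *~ (-1) ^+ l.
Proof.
rewrite /VV /HH dvE /dh /= dhom_tup dhom_tup.
rewrite [in RHS](@big_cat_nat _ _ _ k.+1) //=; last lia.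
rewrite [X in X *~ _]big_nat_recl // [X in _ + X]big_nat_recr //=.
set X := tup k.+1 c; set Y' := tup q.+1 (fun j => c (k.+1 + j)%N).
have hX : forall l, (k < l)%N -> tup k.+1 (fun m => c (bump l m)) = X.
  by move=> l hl; apply: eq_tup => m hm; rewrite bumpE; case: leqP => ?; [lia|].
have -> : tup q.+1 (fun k0 => c (k + bump 0 k0)%N) = Y'.
  by apply: eq_tup => m hm; rewrite bumpE /=; congr c; lia.
rewrite (hX k.+1) //.
have -> : \sum_(0 <= i < k.+1)
    T k q (tup k.+1 (fun k0 => c (bump i k0)), Y') *~ (-1) ^+ i =
  \sum_(0 <= l < k.+1)
    T k q (tup k.+1 (fun m => c (bump l m)), tup q.+1 (fun j => c (bump l (k + j)))) *~ (-1) ^+ l.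
  apply: eq_big_nat => l /andP[_ hl]; congr (T _ _ (_, _) *~ _).
  by apply: eq_tup => m hm; rewrite bumpE; case: leqP => ?; [congr c|]; lia.
have -> : \sum_(k.+1 <= l < (k + q).+2)
    T k q (tup k.+1 (fun m => c (bump l m)), tup q.+1 (fun j => c (bump l (k + j)))) *~ (-1) ^+ l
  = (\sum_(0 <= j < q.+1)
      T k q (X, tup q.+1 (fun k0 => c (k + bump j.+1 k0)%N)) *~ (-1) ^+ j.+1) *~ (-1) ^+ k.
  rewrite -{1}[k.+1]add0n big_addn.
  have -> : ((k + q).+2 - k.+1 = q.+1)%N by lia.
  rewrite mulrz_suml; apply: eq_big_nat => j /andP[_ hj].
  rewrite hX; last lia.
  rewrite -mulrzA -exprD; congr (T _ _ (_, _) *~ (-1) ^+ _); last lia.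
  by apply: eq_tup => m hm; rewrite !bumpE; do 2 case: leqP => ?; congr c; lia.
rewrite expr0 mulr1z exprS mulN1r mulrNz mulrzDl.
set a := \sum_(0 <= l < k.+1) _; set b := (\sum_(0 <= j < q.+1) _) *~ _.
set e := T k q (X, Y') *~ _.
by rewrite [LHS]addrC addrA subrK.
Qed.

Lemma Del_Dt n T : Del n.+1 (Dt T) = dhom (Del n T).
Proof.
apply: functional_extensionality_dep => z; rewrite -(tupK z); move: (nf z) => c.
rewrite Del_tup dhom_tup.
have W : forall k, (k < n.+2)%N -> E (Dt T) k (n.+1 - k) c =
   (if (k <= n)%N then VV T k (n - k) c else 0) +
   (if k is k'.+1 then HH T k' (n - k') c else 0).
  case=> [|k] hk.
    by rewrite !subn0 /E Dt0S addr0.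
  have [hkn|hkn] := leqP k.+1 n.
    have -> : (n.+1 - k.+1 = (n - k.+1).+1)%N by lia.
    rewrite /E DtSS fadd; congr (_ + _).
    change (HH T k (n - k.+1).+1 c = HH T k (n - k) c).
    by have -> : ((n - k.+1).+1 = n - k)%N by lia.
  have ekn : k = n by lia.
  subst k.
  by rewrite !subnn /E DtS0 add0r.
under eq_big_nat => k /andP[_ hk] do rewrite W //.
rewrite big_split /=.
rewrite big_nat_recr //= ltnn addr0 [X in _ + X]big_nat_recl //= add0r.
rewrite (@eq_big_nat _ _ _ 0 n.+1 _ (fun i => VV T i (n - i) c)); last first.
  by move=> i /andP[_ hi]; rewrite ltnS in hi; rewrite hi.
rewrite -big_split /=.
under [RHS]eq_big_nat => l _ do rewrite Del_tup mulrz_suml.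
rewrite exchange_big_nat /=; apply: eq_big_nat => k /andP[_ hk].
rewrite PK.
have -> : (k + (n - k) = n)%N by lia.
by [].
Qed.

Definition alpha m (g : G ^^ m.+1 -> A) : Bi := fun p q xy =>
  if p == 0%N then g (tup m.+1 (nf xy.2)) else 0.
Definition bet m (h : G ^^ m.+1 -> A) : Bi := fun p q xy =>
  if q == 0%N then h (tup m.+1 (nf xy.1)) else 0.
Arguments alpha : clear implicits.
Arguments bet : clear implicits.

Lemma Del_alpha n g : Del n (alpha n g) = g.
Proof.
apply: functional_extensionality_dep => z; rewrite -(tupK z); move: (nf z) => c.
rewrite Del_tup big_nat_recl // big1_seq ?addr0 /=.
  rewrite /E /alpha /=; congr g; apply: eq_tup => k hk; rewrite nf_tup //; lia.
by move=> k _; rewrite /E /alpha.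
Qed.

Lemma Del_bet n h : Del n (bet n h) = h.
Proof.
apply: functional_extensionality_dep => z; rewrite -(tupK z); move: (nf z) => c.
rewrite Del_tup big_nat_recr //= big1_seq ?add0r /=.
  by rewrite /E /bet subnn /=; congr h; apply: eq_tup => k hk; rewrite nf_tup.
move=> k; rewrite mem_index_iota => /andP[_ hk]; rewrite /E /bet.
by have -> : (n - k == 0)%N = false by apply/negbTE; lia.
Qed.

Lemma Del_ext n T T' : (forall p q, (p + q = n)%N -> T p q = T' p q) ->
  Del n T = Del n T'.
Proof.
move=> h; apply: functional_extensionality_dep => z.
apply: eq_big_nat => k /andP[_ hk]; rewrite h //; lia.
Qed.

Lemma Del_add n T T' : Del n (addB T T') = Del n T + Del n T'.
Proof.
apply: functional_extensionality_dep => z; rewrite fadd /Del -big_split.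
by apply: eq_big_nat => k _.
Qed.

Definition cat a (u v : nat -> G) k := if (k < a)%N then u k else v (k - a)%N.
Definition Th n (f : G ^^ n.+1 -> A) : Bi := fun p q xy =>
  f (tup n.+1 (cat p.+1 (nf xy.1) (nf xy.2))) *~ (-1) ^+ p.
Arguments Th : clear implicits.

Lemma sgS (x : A) k : x *~ (-1) ^+ k.+1 = - (x *~ (-1) ^+ k).
Proof. by rewrite exprS mulN1r mulrNz. Qed.

Lemma cat_split N p q (f : G ^^ N.+1 -> A) u v : (p + q = N)%N ->
  dhom f (tup N.+2 (cat p.+1 u v)) =
  \sum_(0 <= i < p.+1) f (tup N.+1 (cat p (fun k => u (bump i k)) v)) *~ (-1) ^+ i +
  (\sum_(0 <= j < q.+1) f (tup N.+1 (cat p.+1 u (fun k => v (bump j k)))) *~ (-1) ^+ j)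
     *~ (-1) ^+ p.+1.
Proof.
move=> hN; rewrite dhom_tup (@big_cat_nat _ _ _ p.+1) //=; last lia.
congr (_ + _).
  apply: eq_big_nat => i /andP[_ hi]; congr (f _ *~ _); apply: eq_tup => k hk.
  rewrite /cat !bumpE; case: (leqP i k) => ?; do ?case: ltnP => ?; try lia;
  first [ by [] | congr v; lia | congr u; lia ].
rewrite -{1}[p.+1]add0n big_addn mulrz_suml.
have -> : (N.+2 - p.+1 = q.+1)%N by lia.
apply: eq_big_nat => j /andP[_ hj]; rewrite -mulrzA -exprD addnC.
congr (f _ *~ _); apply: eq_tup => k hk.
rewrite /cat !bumpE; case: (leqP (p.+1 + j) k) => ?; case: (leqP j (k - p.+1)) => ?;
  do ?case: ltnP => ?; try lia; first [ by [] | congr v; lia | congr u; lia ].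
Qed.

Lemma sgsg (x : A) k : x *~ (-1) ^+ k *~ (-1) ^+ k = x.
Proof. by elim: k => [|k IH]; rewrite ?expr0 ?mulr1z // !sgS mulNrz opprK IH. Qed.

Lemma sum_sgc (r : seq nat) (F : nat -> A) c :
  \sum_(i <- r) (F i *~ c) *~ (-1) ^+ i = (\sum_(i <- r) F i *~ (-1) ^+ i) *~ c.
Proof. by rewrite mulrz_suml; apply: eq_bigr => i _; rewrite -!mulrzA mulrC. Qed.

Lemma Th_y n f p q x (y : G ^^ q.+2) j : (p + q.+1 = n)%N -> (j < q.+2)%N ->
  Th n f p q (x, tup q.+1 (fun k => nf y (bump j k))) =
  f (tup n.+1 (cat p.+1 (nf x) (fun k => nf y (bump j k)))) *~ (-1) ^+ p.
Proof.
move=> hn hj; rewrite /Th /=; congr (f _ *~ _); apply: eq_tup => k hk.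
rewrite /cat; case: ltnP => ? //; rewrite nf_tup //; lia.
Qed.

Lemma Th_x n f p q (x : G ^^ p.+2) y i :
  Th n f p q (tup p.+1 (fun k => nf x (bump i k)), y) =
  f (tup n.+1 (cat p.+1 (fun k => nf x (bump i k)) (nf y))) *~ (-1) ^+ p.
Proof.
rewrite /Th /=; congr (f _ *~ _); apply: eq_tup => k hk.
by rewrite /cat; case: ltnP => ? //; rewrite nf_tup.
Qed.

Lemma Th0 m f : dhom f = 0 -> Dt (Th m.+1 f) 0 m.+1 = fun xy => f xy.2.
Proof.
move=> hf; apply: functional_extensionality_dep => -[x y].
rewrite Dt0S dvE /= expr0 mulr1z dhomE.
under eq_big_nat => i /andP[_ hi] do rewrite Th_y // expr0 mulr1z.
have := congr1 (fun h => h (tup m.+3 (cat 1 (nf x) (nf y)))) hf.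
rewrite fzero (@cat_split _ 0 m.+1) // big_nat1 expr0 mulr1z sgS expr0 mulr1z.
have -> : tup m.+2 (cat 0 (fun k => nf x (bump 0 k)) (nf y)) = y.
  by rewrite -[RHS]tupK; apply: eq_tup => k hk; rewrite /cat subn0.
by move/eqP; rewrite subr_eq0 => /eqP ->.
Qed.

Lemma ThSS m f p q : dhom f = 0 -> (p.+1 + q.+1 = m.+1)%N ->
  Dt (Th m.+1 f) p.+1 q.+1 = 0.
Proof.
move=> hf hpq; apply: functional_extensionality_dep => -[x y].
rewrite DtSS fadd fzero dvE /dh /= !dhomE.
under eq_big_nat => i /andP[_ hi] do rewrite Th_y //.
under [X in _ + X]eq_big_nat => i /andP[_ hi] do rewrite Th_x.
rewrite !sum_sgc sgsg.
have := congr1 (fun h => h (tup m.+3 (cat p.+2 (nf x) (nf y)))) hf.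
rewrite fzero (@cat_split _ p.+1 q.+1); last lia.
rewrite !sgS opprK => /eqP; rewrite addr_eq0 => /eqP ->.
by rewrite mulNrz sgsg; apply/eqP; rewrite subr_eq0; apply/eqP; apply: eq_big_nat.
Qed.

Lemma Thdh m f : dhom f = 0 -> dh (Th m.+1 f m 0) = fun xy => - f xy.1.
Proof.
move=> hf; apply: functional_extensionality_dep => -[x y].
rewrite /dh /= dhomE.
under eq_big_nat => i /andP[_ hi] do rewrite Th_x.
rewrite sum_sgc.
have := congr1 (fun h => h (tup m.+3 (cat m.+2 (nf x) (nf y)))) hf.
rewrite fzero (@cat_split _ m.+1 0); last lia.
rewrite big_nat1 expr0 mulr1z.
have -> : tup m.+2 (cat m.+2 (nf x) (fun k => nf y (bump 0 k))) = x.
  by rewrite -[RHS]tupK; apply: eq_tup => k hk; rewrite /cat hk.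
rewrite !sgS opprK => /eqP; rewrite addr_eq0 => /eqP ->.
by rewrite mulNrz sgsg.
Qed.

Lemma ptws_cvg (X : Type) (F : set_system X) (FF : Filter F) (I : Type)
  (T : topologicalType) (h : X -> {ptws I -> T}) (t : {ptws I -> T}) :
  (forall i, (fun x => h x i) @ F --> t i) -> h @ F --> t.
Proof.
move=> H.
apply/cvg_sup => i A0 /=.
rewrite (@nbhsE (initial_topology (fun f : {ptws I -> T} => f i))) => -[B [oB Bt] BA].
case: oB => C oC CB.
have : nbhs (t i) C.
  apply: open_nbhs_nbhs; split => //. by rewrite -CB in Bt.
move/H; rewrite nbhs_simpl /=.
apply: filterS => x Cx; apply: BA; rewrite -CB; exact: Cx.
Qed.

Lemma cont_ptws (X : topologicalType) N (phi : X -> G ^^ N) :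
  (forall i, continuous (fun x => phi x i)) -> continuous phi.
Proof. by move=> h x; apply: ptws_cvg => i; exact: h. Qed.

Lemma cont_proj N (i : 'I_N) : continuous (fun x : G ^^ N => x i).
Proof. exact: (@proj_continuous _ (fun _ => tg_car G) i). Qed.

Lemma cont_nf N k : continuous (fun x : G ^^ N => nf x k).
Proof.
rewrite /nf; case: insub => [i|]; [exact: cont_proj | exact: cst_continuous].
Qed.

Lemma cont_comp (X Y Z : topologicalType) (f : X -> Y) (g : Y -> Z) :
  continuous f -> continuous g -> continuous (fun x => g (f x)).
Proof. by move=> hf hg x; apply: continuous_comp; [exact: hf|exact: hg]. Qed.

Lemma cont_pair (X Y Z : topologicalType) (f : X -> Y) (g : X -> Z) :
  continuous f -> continuous g -> continuous (fun x => (f x, g x)).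
Proof. by move=> hf hg x; apply: cvg_pair; [exact: hf|exact: hg]. Qed.

Lemma cont_fst (X Y : topologicalType) : continuous (@fst X Y).
Proof. by move=> [a b]; exact: cvg_fst. Qed.
Lemma cont_snd (X Y : topologicalType) : continuous (@snd X Y).
Proof. by move=> [a b]; exact: cvg_snd. Qed.

Lemma cont_mul (X : topologicalType) (a b : X -> G) :
  continuous a -> continuous b -> continuous (fun x => mul (a x) (b x)).
Proof.
move=> ha hb; apply: (@cont_comp _ _ _ (fun x => (a x, b x)) (fun p => mul p.1 p.2)).
  exact: cont_pair.
exact: tg_mul_cont.
Qed.

Lemma cont_inv (X : topologicalType) (a : X -> G) :
  continuous a -> continuous (fun x => inv (a x)).
Proof. by move=> ha; apply: cont_comp ha _; exact: tg_inv_cont. Qed.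

Lemma wc_comp (X Y Z : topologicalType) (S : set X) (B : set Y) (phi : X -> Y)
  (f : Y -> Z) :
  {within B, continuous f} -> (forall x, S x -> B (phi x)) -> continuous phi ->
  {within S, continuous (fun x => f (phi x))}.
Proof.
move=> hf hSB hphi; apply/subspace_continuousP => x Sx.
have hfx := (subspace_continuousP _ _).1 hf (phi x) (hSB _ Sx).
apply: (@cvg_comp _ _ _ phi f _ (within B (nbhs (phi x)))) => //.
move=> W /= hW; rewrite /within /= in hW *.
have := hphi x _ hW; rewrite nbhs_simpl /=.
by apply: filterS => z h Sz; exact: h (hSB _ Sz).
Qed.

Lemma wc_add (X : topologicalType) (S : set X) (f g : X -> A) :
  {within S, continuous f} -> {within S, continuous g} ->
  {within S, continuous (fun x => f x + g x)}.
Proof.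
move=> hf hg; apply/subspace_continuousP => x Sx.
have hf' := (subspace_continuousP _ _).1 hf x Sx.
have hg' := (subspace_continuousP _ _).1 hg x Sx.
apply: (@cvg_comp _ _ _ (fun z => (f z, g z)) (fun p => p.1 + p.2) _ (nbhs (f x, g x))).
  exact: cvg_pair.
exact: (@add_continuous (tm_car A) (f x, g x)).
Qed.

Lemma wc_opp (X : topologicalType) (S : set X) (f : X -> A) :
  {within S, continuous f} -> {within S, continuous (fun x => - f x)}.
Proof.
move=> hf; apply/subspace_continuousP => x Sx.
have hf' := (subspace_continuousP _ _).1 hf x Sx.
apply: (@cvg_comp _ _ _ f (fun p => - p) _ (nbhs (f x))) => //.
exact: (@opp_continuous (tm_car A) (f x)).
Qed.

Lemma wc_cst (X : topologicalType) (S : set X) (a : A) :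
  {within S, continuous (fun _ => a)}.
Proof. by apply: continuous_subspaceT; exact: cst_continuous. Qed.

Lemma wc_mulrn (X : topologicalType) (S : set X) (f : X -> A) n :
  {within S, continuous f} -> {within S, continuous (fun x => f x *+ n)}.
Proof.
move=> hf; elim: n => [|n IH].
  by under eq_fun do rewrite mulr0n; exact: wc_cst.
by under eq_fun do rewrite mulrS; exact: wc_add.
Qed.

Lemma wc_mulrz (X : topologicalType) (S : set X) (f : X -> A) z :
  {within S, continuous f} -> {within S, continuous (fun x => f x *~ z)}.
Proof.
move=> hf; case: z => n; first exact: wc_mulrn.
by under eq_fun do rewrite NegzE mulrNz; apply: wc_opp; exact: wc_mulrn.
Qed.

Lemma wc_sum (X : topologicalType) (S : set X) (I : Type) (r : seq I) (F : I -> X -> A) :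
  (forall i, {within S, continuous (F i)}) ->
  {within S, continuous (fun x => \sum_(i <- r) F i x)}.
Proof.
move=> hF; elim: r => [|i r IH].
  by under eq_fun do rewrite big_nil; exact: wc_cst.
by under eq_fun do rewrite big_cons; exact: wc_add.
Qed.

Lemma wc_act (X : topologicalType) (S : set X) (a : X -> G) (b : X -> A) :
  continuous a -> {within S, continuous b} ->
  {within S, continuous (fun x => act (a x) (b x))}.
Proof.
move=> ha hb; apply/subspace_continuousP => x Sx.
have hb' := (subspace_continuousP _ _).1 hb x Sx.
have ha' : a @ within S (nbhs x) --> a x.
  exact: (cvg_trans (cvg_app a (@cvg_within _ (nbhs x) _ S)) (ha x)).
apply: (@cvg_comp _ _ _ (fun z => (a z, b z)) (fun p => act p.1 p.2) _ (nbhs (a x, b x))).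
  exact: cvg_pair.
exact: (@tm_act_cont G A (a x, b x)).
Qed.


Lemma invgK (a : G) : inv (inv a) = a.
Proof. by rewrite -[inv (inv a)]tg_mulg1 -(tg_mulVg a) tg_mulA tg_mulVg tg_mul1g. Qed.

Definition lm (g : G) n (x : G ^^ n) : G ^^ n := fun i => mul (inv g) (x i).

Lemma Gamma_lm U q g (y : G ^^ q.+1) : Gamma G U q y -> Gamma G U q (lm g y).
Proof.
case: q y => [|q] y //= h i j; rewrite /lm invMg invgK -tg_mulA mulKVg; exact: h.
Qed.

Lemma Gamma_sub U m q (z : G ^^ m.+1) (y : G ^^ q.+1) : U one ->
  (forall i, exists i', y i = z i') -> Gamma G U m z -> Gamma G U q y.
Proof.
case: q y => [|q] y U1 h hz //=; move=> i j.
have [i' ->] := h i; have [j' ->] := h j.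
case: m z hz i' j' {h} => [|m] z hz i' j' /=.
  by rewrite !ord1 tg_mulVg.
exact: hz.
Qed.

Lemma Gamma_I U V q : Gamma G (U `&` V) q `<=` Gamma G U q.
Proof. by case: q => [|q] //= y h i j; case: (h i j). Qed.
Lemma Gamma_I2 U V q : Gamma G (U `&` V) q `<=` Gamma G V q.
Proof. by case: q => [|q] //= y h i j; case: (h i j). Qed.

Definition inv2 p q (F : K p q) :=
  forall (g : G) x y, act g (F (lm g x, lm g y)) = F (x, y).
Definition Kp p q (F : K p q) := inv2 F /\ Alc F.

Lemma Alc_within p q (F : K p q) U : nbhs one U ->
  {within setT `*` Gamma G U q, continuous F} -> Alc F.
Proof. by move=> hU hF; exists U. Qed.

Lemma Alc_add p q (F F' : K p q) : Alc F -> Alc F' -> Alc (fun xy => F xy + F' xy).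
Proof.
move=> [U [hU hF]] [V [hV hF']]; exists (U `&` V); split; first exact: filterI.
apply: wc_add.
  by apply: continuous_subspaceW hF => -[x y] [_ /Gamma_I h]; split.
by apply: continuous_subspaceW hF' => -[x y] [_ /Gamma_I2 h]; split.
Qed.

Lemma Kp0 p q : Kp (0 : K p q).
Proof.
split; first by move=> g x y; rewrite !fzero act0.
exists setT; split; first exact: filterT.
exact: wc_cst.
Qed.

Lemma KpD p q (F F' : K p q) : Kp F -> Kp F' -> Kp (F + F').
Proof.
move=> [iF aF] [iF' aF']; split; first by move=> g x y; rewrite !fadd tm_act_add iF iF'.
exact: Alc_add.
Qed.

Lemma KpN p q (F : K p q) : Kp F -> Kp (- F).
Proof.
move=> [iF [U [hU hF]]]; split; first by move=> g x y; rewrite !fopp actN iF.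
by exists U; split => //; apply: wc_opp.
Qed.

Lemma KpB p q (F F' : K p q) : Kp F -> Kp F' -> Kp (F - F').
Proof. by move=> h h'; apply: KpD => //; apply: KpN. Qed.

Lemma cont_face n (i : 'I_n.+2) :
  continuous (fun x : G ^^ n.+2 => ((fun j : 'I_n.+1 => x (lift i j)) : G ^^ n.+1)).
Proof. by apply: cont_ptws => j; exact: cont_proj. Qed.

Lemma Kp_dh p q (F : K p q) : Kp F -> Kp (dh F).
Proof.
move=> [iF [U [hU hF]]]; split.
  move=> g x y; rewrite /dh /dhom act_sum; apply: eq_bigr => i _.
  by rewrite act_mulrz; congr (_ *~ _); exact: iF.
exists U; split => //; rewrite /dh /dhom; apply: wc_sum => i; apply: wc_mulrz.
apply: (wc_comp hF); first by move=> -[x y] [_ hy]; split.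
apply: cont_pair; last exact: cont_snd.
exact: cont_comp (@cont_fst _ _) (@cont_face p i).
Qed.

Lemma Kp_dv p q (F : K p q) : Kp F -> Kp (dv F).
Proof.
move=> [iF [U [hU hF]]]; split.
  move=> g x y; rewrite !dvE /dhom act_mulrz act_sum; congr (_ *~ _).
  apply: eq_bigr => i _.
  by rewrite act_mulrz; congr (_ *~ _); exact: iF.
exists U; split => //.
have U1 : U one by exact: nbhs_singleton.
apply: wc_mulrz; apply: wc_sum => i; apply: wc_mulrz.
apply: (wc_comp hF).
  move=> -[x y] [_ hy]; split => //=; apply: Gamma_sub U1 _ hy.
  by move=> j; exists (lift i j).
apply: cont_pair; first exact: cont_fst.
exact: cont_comp (@cont_snd _ _) (@cont_face q i).
Qed.

Lemma Kp_Dt (S : Bi) p q :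
  (forall p' q', ((p' + q').+1 = p + q)%N -> Kp (S p' q')) -> Kp (Dt S p q).
Proof.
move=> hS; case: p hS => [|p] hS; case: q hS => [|q] hS.
- by rewrite Dt00; exact: Kp0.
- by rewrite Dt0S; apply: Kp_dv; apply: hS.
- by rewrite DtS0; apply: Kp_dh; apply: hS.
- by rewrite DtSS; apply: KpD; [apply: Kp_dv|apply: Kp_dh]; apply: hS; lia.
Qed.

Lemma alpha0 m (g : G ^^ m.+1 -> A) : alpha m g 0 m = fun xy => g xy.2.
Proof. by apply: functional_extensionality_dep => xy; rewrite /alpha /= tupK. Qed.
Lemma alphaS m (g : G ^^ m.+1 -> A) p q : alpha m g p.+1 q = 0.
Proof. by apply: functional_extensionality_dep => xy. Qed.
Lemma bet0 m (h : G ^^ m.+1 -> A) : bet m h m 0 = fun xy => h xy.1.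
Proof. by apply: functional_extensionality_dep => xy; rewrite /bet /= tupK. Qed.
Lemma betS m (h : G ^^ m.+1 -> A) p q : bet m h p q.+1 = 0.
Proof. by apply: functional_extensionality_dep => xy. Qed.

Lemma Kp_alpha0 m (g : G ^^ m.+1 -> A) : Clc g -> Kp (alpha m g 0 m).
Proof.
move=> [eg [U [hU hg]]]; rewrite alpha0; split.
  by move=> h x y /=; exact: eg.
exists U; split => //; apply: (wc_comp hg); first by move=> -[x y] [].
exact: cont_snd.
Qed.

Lemma nf_lm N g (x : G ^^ N) k : (k < N)%N -> nf (lm g x) k = mul (inv g) (nf x k).
Proof. by move=> hk; rewrite /nf insubT. Qed.

Lemma cont_cat p q a :
  continuous (fun xy : G ^^ p.+1 * G ^^ q.+1 => tup a (cat p.+1 (nf xy.1) (nf xy.2))).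
Proof.
apply: cont_ptws => k; rewrite /tup /cat; case: ltnP => _.
  exact: cont_comp (@cont_fst _ _) (@cont_nf _ _).
exact: cont_comp (@cont_snd _ _) (@cont_nf _ _).
Qed.

Lemma Kp_Th n (f : G ^^ n.+1 -> A) p q : continuous f -> equivariant f ->
  ((p + q).+1 = n)%N -> Kp (Th n f p q).
Proof.
move=> cf ef hn; split.
  move=> g x y; rewrite /Th /= act_mulrz; congr (_ *~ _).
  rewrite -[RHS](ef g); congr (act g (f _)).
  apply: functional_extensionality_dep => i; rewrite /tup /cat.
  case: ltnP => hi; rewrite nf_lm //; have := ltn_ord i; lia.
exists setT; split; first exact: filterT.
apply: wc_mulrz; apply: continuous_subspaceT.
exact: cont_comp (@cont_cat _ _ _) cf.
Qed.

Definition single j d (H : K j d) : Bi := fun p q xy =>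
  if (p == j) && (q == d) then H (tup j.+1 (nf xy.1), tup d.+1 (nf xy.2)) else 0.
Arguments single : clear implicits.

Lemma single_jd j d H : single j d H j d = H.
Proof.
apply: functional_extensionality_dep => -[x y]; by rewrite /single !eqxx /= !tupK.
Qed.

Lemma Kp_single j d H : Kp H -> forall p q, Kp (single j d H p q).
Proof.
move=> hH p q; case: (eqVneq p j) => [ep|hp].
  subst p; case: (eqVneq q d) => [eq|hq].
    by subst q; rewrite single_jd.
  have -> : single j d H j q = 0.
    by apply: functional_extensionality_dep => xy; rewrite /single (negbTE hq) andbF.
  exact: Kp0.
have -> : single j d H p q = 0.
  by apply: functional_extensionality_dep => xy; rewrite /single (negbTE hp).
exact: Kp0.
Qed.

Lemma lc_sum m (r : seq nat) (F : nat -> G ^^ m.+1 -> A) :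
  (forall k, k \in r -> exists U, nbhs one U /\ {within Gamma G U m, continuous (F k)}) ->
  exists U, nbhs one U /\
    {within Gamma G U m, continuous (fun z => \sum_(k <- r) F k z)}.
Proof.
elim: r => [|k r IH] h.
  exists setT; split; first exact: filterT.
  have -> : (fun z => \sum_(k <- [::]) F k z) = fun _ => 0.
    by apply: functional_extensionality_dep => z; rewrite big_nil.
  exact: wc_cst.
have [U [hU hk]] := h k (mem_head _ _).
have [V [hV hr]] := IH (fun k' hk' => h k' ltac:(by rewrite inE hk' orbT)).
exists (U `&` V); split; first exact: filterI.
have -> : (fun z => \sum_(k0 <- k :: r) F k0 z) = fun z => F k z + \sum_(k0 <- r) F k0 z.
  by apply: functional_extensionality_dep => z; rewrite big_cons.
apply: wc_add.
  by apply: continuous_subspaceW hk; exact: Gamma_I.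
by apply: continuous_subspaceW hr; exact: Gamma_I2.
Qed.

Lemma Clc_Del m (S : Bi) : (forall p q, (p + q = m)%N -> Kp (S p q)) ->
  Clc (Del m S).
Proof.
move=> hS; split.
  move=> g z; rewrite /Del act_sum; apply: eq_big_nat => k /andP[_ hk].
  have [iS _] := hS k (m - k)%N ltac:(lia).
  rewrite -[RHS](iS g); congr (act g (S _ _ (_, _))).
    by apply: functional_extensionality_dep => i; rewrite /tup nf_lm //; have := ltn_ord i; lia.
  by apply: functional_extensionality_dep => i; rewrite /tup nf_lm //; have := ltn_ord i; lia.
apply: lc_sum => k; rewrite mem_index_iota => /andP[_ hk].
have [_ [U [hU hSk]]] := hS k (m - k)%N ltac:(lia).
exists U; split => //.
have U1 : U one by exact: nbhs_singleton.
apply: (wc_comp hSk).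
  move=> z hz; split => //=; apply: Gamma_sub U1 _ hz => j.
  have hj : (k + j < m.+1)%N by have := ltn_ord j; lia.
  by exists (Ordinal hj); rewrite /tup -(nf_ord z (Ordinal hj)).
apply: cont_pair; apply: cont_ptws => i; exact: cont_nf.
Qed.

Lemma colinv p q (F : K p q.+1) : column_exact A p -> Kp F -> dv F = 0 ->
  exists H : K p q, Kp H /\ F = dv H.
Proof.
move=> [_ [_ hc]] [iF aF] hd; have [H0 [[U [hU aH0]] eF]] := hc q F aF hd.
pose H := fun xy : G ^^ p.+1 * G ^^ q.+1 =>
  act (xy.1 ord0) (H0 (lm (xy.1 ord0) xy.1, lm (xy.1 ord0) xy.2)).
have lmlm : forall n g (x : G ^^ n) a, lm (mul (inv g) a) (lm g x) = lm a x.
  move=> n g x a; apply: functional_extensionality_dep => i.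
  by rewrite /lm invMg invgK -tg_mulA mulKVg.
exists H; split; first split.
- move=> g x y; rewrite /H /= -tm_act_mul mulKVg.
  by have -> : lm g x ord0 = mul (inv g) (x ord0) by []; rewrite !lmlm.
- exists U; split => //; apply: wc_act.
    exact: cont_comp (@cont_fst _ _) (@cont_proj _ _).
  apply: (wc_comp aH0).
    by move=> -[x y] [_ hy]; split => //=; apply: Gamma_lm.
  have c0 : continuous (fun xy : G ^^ p.+1 * G ^^ q.+1 => xy.1 ord0).
    exact: cont_comp (@cont_fst _ _) (@cont_proj _ _).
  apply: cont_pair; apply: cont_ptws => i; apply: cont_mul.
  + exact: cont_inv.
  + exact: cont_comp (@cont_fst _ _) (@cont_proj _ _).
  + exact: cont_inv.
  + exact: cont_comp (@cont_snd _ _) (@cont_proj _ _).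
apply: functional_extensionality_dep => -[x y].
rewrite -[LHS](iF (x ord0)) eF !dvE act_mulrz /dhom act_sum; congr (_ *~ _).
by apply: eq_bigr => i _; rewrite act_mulrz.
Qed.

Lemma colinv0 p (F : K p 0) : column_exact A p -> Kp F -> dv F = 0 ->
  exists h : G ^^ p.+1 -> A, continuous h /\ equivariant h /\ F = fun xy => h xy.1.
Proof.
move=> [_ [hc _]] [iF aF] hd; have [h [ch eF]] := hc F aF hd.
exists h; split => //; split => //.
move=> g x; have := iF g x (fun _ => one); by rewrite eF.
Qed.

Definition zeroB : Bi := fun p q => 0.

Lemma Dt_zero p q : Dt zeroB p q = 0.
Proof.
case: p => [|p]; case: q => [|q].
- by rewrite Dt00.
- by rewrite Dt0S dv0.
- by rewrite DtS0 dh0.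
- by rewrite DtSS dv0 dh0 addr0.
Qed.

Lemma single_ne j d H p q : p != j -> single j d H p q = 0.
Proof.
by move=> hp; apply: functional_extensionality_dep => xy; rewrite /single (negbTE hp).
Qed.

Lemma Dt_single j d H : Dt (single j d H) j d.+1 = dv H.
Proof.
case: j H => [|j] H; first by rewrite Dt0S single_jd.
by rewrite DtSS single_jd single_ne ?dh0 ?addr0 // neq_ltn ltnSn.
Qed.

Lemma Lgen m d : (d <= m)%N -> (forall p, column_exact A p) ->
  forall T : Bi,
  (forall p q, (p + q = m)%N -> Kp (T p q)) ->
  (forall p q, (p + q = m)%N -> Dt T p q.+1 = 0) ->
  (forall p q, (p + q = m)%N -> (p + d < m)%N -> T p q = 0) ->
  exists S : Bi, (forall p q, Kp (S p q)) /\
   exists h : G ^^ m.+1 -> A, continuous h /\ equivariant h /\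
     forall p q, (p + q = m)%N -> T p q = Dt S p q + bet m h p q.
Proof.
move=> + hce; elim: d => [|d IH] hd T hK hD hV.
  have dvT : dv (T m 0) = 0.
    have := hD m 0 (addn0 m); case: m {hd} hK hD hV => [|m] hK hD hV.
      by rewrite Dt0S.
    rewrite DtSS (hV m 1%N) ?dh0 ?addr0 //; lia.
  have [h [ch [eh eT]]] := colinv0 (hce m) (hK m 0 (addn0 m)) dvT.
  exists zeroB; split; first by move=> p q; exact: Kp0.
  exists h; split => //; split => //.
  move=> p q hpq; rewrite Dt_zero add0r.
  case: q hpq => [|q] hpq.
    by rewrite addn0 in hpq; subst p; rewrite bet0.
  by rewrite betS (hV p q.+1) //; lia.
pose j := (m - d.+1)%N.
have hj : (j + d.+1 = m)%N by rewrite /j; lia.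
have dvT : dv (T j d.+1) = 0.
  have := hD j d.+1 hj.
  case: j hj => [|j'] hj'; first by rewrite Dt0S.
  rewrite DtSS (hV j' d.+2) ?dh0 ?addr0 //; lia.
have [H [KH eH]] := colinv (hce j) (hK j d.+1 hj) dvT.
pose S0 := single j d H.
have KS0 : forall p q, Kp (S0 p q) by exact: Kp_single.
have hK' : forall p q, (p + q = m)%N -> Kp (subB T (Dt S0) p q).
  move=> p q hpq; apply: KpB; first exact: hK.
  by apply: Kp_Dt => p' q' _; exact: KS0.
have hD' : forall p q, (p + q = m)%N -> Dt (subB T (Dt S0)) p q.+1 = 0.
  by move=> p q hpq; rewrite Dt_sub DtDt hD // subr0.
have hV' : forall p q, (p + q = m)%N -> (p + d < m)%N -> subB T (Dt S0) p q = 0.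
  move=> p q hpq hpd; rewrite /subB.
  have [hpj|hpj] := ltnP p j.
    rewrite hV; last lia; last lia.
    have e2 : forall p' q', (p' < j)%N -> S0 p' q' = 0.
      by move=> p' q' h0; apply: single_ne; rewrite neq_ltn h0.
    case: p hpq hpd hpj => [|p] hpq hpd hpj; case: q hpq hpd => [|q] hpq hpd.
    + by rewrite Dt00 subr0.
    + by rewrite Dt0S (e2 0%N q) // dv0 subr0.
    + by rewrite DtS0 (e2 p 0%N) ?dh0 ?subr0 //; lia.
    + rewrite DtSS (e2 p.+1 q) // (e2 p q.+1) ?dv0 ?dh0 ?addr0 ?subr0 //; lia.
  have epj : p = j by lia.
  subst p; have eq : q = d.+1 by lia.
  subst q; rewrite eH.
  by rewrite /S0 Dt_single subrr.
have [S' [KS' [h [ch [eh hT]]]]] := IH (ltnW hd) (subB T (Dt S0)) hK' hD' hV'.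
exists (addB S' S0); split.
  by move=> p q; apply: KpD; [exact: KS'|exact: KS0].
exists h; split => //; split => //.
move=> p q hpq; rewrite Dt_add -addrAC -hT //.
by rewrite /subB subrK.
Qed.

Lemma dv_alpha0 m g : dv (alpha m g 0 m) = fun xy => dhom g xy.2.
Proof.
rewrite alpha0; apply: functional_extensionality_dep => xy.
by rewrite dvE expr0 mulr1z.
Qed.

Lemma dh_alpha0 m g q : dh (alpha m g 0 q) = 0.
Proof.
apply: functional_extensionality_dep => -[x y].
by rewrite /dh /dhom /alpha /= big_ord_recr /= big_ord1 expr0 expr1 mulr1z mulrN1z subrr.
Qed.

Lemma Dt_alphaS m g p q : Dt (alpha m g) p.+1 q.+1 = 0.
Proof.
rewrite DtSS alphaS dv0 add0r; case: p => [|p]; first exact: dh_alpha0.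
by rewrite alphaS dh0.
Qed.

Lemma cont_withinT (X Y : topologicalType) (f : X -> Y) :
  {within setT, continuous f} -> continuous f.
Proof. by move=> hf x; have := hf x; rewrite /continuous_at nbhs_subspaceT. Qed.

Lemma Kp_alpha m g p q : (p + q = m)%N -> Clc g -> Kp (alpha m g p q).
Proof.
case: p => [|p] hpq hg; last by rewrite alphaS; exact: Kp0.
by rewrite add0n in hpq; subst q; exact: Kp_alpha0.
Qed.

Lemma dh_alpha_m m g : dh (alpha m g m 0) = 0.
Proof. by case: m g => [|m] g; [exact: dh_alpha0 | rewrite alphaS dh0]. Qed.
Lemma dh_Dt_m0 (S : Bi) m : dh (Dt S m 0) = 0.
Proof. by case: m => [|m]; [rewrite Dt00 dh0 | rewrite DtS0 dhdh]. Qed.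

Lemma main_sec : (forall p, column_exact A p) -> inclusion_induces_iso_in_cohomology A.
Proof.
move=> hce n; split.
- case: n => [|m] f [[ef cf] df0] /=; first by [].
  move=> [g [Cg fdg]].
  pose T := subB (alpha m g) (Th m.+1 f).
  have hK : forall p q, (p + q = m)%N -> Kp (T p q).
    move=> p q hpq; apply: KpB; first exact: Kp_alpha.
    by apply: Kp_Th => //; lia.
  have hD : forall p q, (p + q = m)%N -> Dt T p q.+1 = 0.
    move=> p q hpq; rewrite Dt_sub; case: p hpq => [|p] hpq.
      rewrite add0n in hpq; subst q.
      by rewrite Dt0S dv_alpha0 Th0 // -fdg subrr.
    rewrite Dt_alphaS ThSS // ?subrr //; lia.
  have [S [KS [h [ch [eh hT]]]]] := Lgen (leqnn m) hce hK hD ltac:(move=> *; lia).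
  exists h; split; first by split.
  have e1 := congr1 (@dh m 0%N) (hT m 0%N (addn0 m)).
  rewrite dhD bet0 /T /subB dhD dhN Thdh // in e1.
  rewrite dh_alpha_m dh_Dt_m0 !add0r in e1.
  apply: functional_extensionality_dep => x.
  have := congr1 (fun F => F (x, (fun _ => one) : G ^^ 1)) e1; rewrite fopp opprK /dh /=.
  by move=> ->.
- case: n => [|m] f [[ef cf] df0].
    exists f; split; last by rewrite subrr.
    split; last exact: df0.
    split => //; have [U [_ hU]] := cf; exact: cont_withinT.
  pose T := alpha m.+1 f.
  have hK : forall p q, (p + q = m.+1)%N -> Kp (T p q).
    by move=> p q hpq; exact: Kp_alpha.
  have hD : forall p q, (p + q = m.+1)%N -> Dt T p q.+1 = 0.
    move=> p q hpq; case: p hpq => [|p] hpq; last exact: Dt_alphaS.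
    rewrite add0n in hpq; subst q.
    by rewrite Dt0S dv_alpha0 df0.
  have [S [KS [h [ch [eh hT]]]]] := Lgen (leqnn m.+1) hce hK hD ltac:(move=> *; lia).
  have ef' : f = dhom (Del m S) + h.
    rewrite -(Del_alpha f) -/T (Del_ext (T' := addB (Dt S) (bet m.+1 h))) //.
    by rewrite Del_add Del_Dt Del_bet.
  exists h; split.
    split; first by split.
    have := congr1 (@dhom G A m.+1) ef'; rewrite dhomD dhom2 add0r df0 => <-.
    by [].
  exists (Del m S); split; first by apply: Clc_Del => p q _; exact: KS.
  by rewrite ef' addrK.
Qed.

End Main.

Theorem mainTheorem6 (G : topGroup) (A : topGModule G) :
  (forall p : nat, column_exact A p) ->
  inclusion_induces_iso_in_cohomology A.
Proof. exact: main_sec. Qed.
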